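(* Let $\mathcal N$ be a normal network on $X$ with $|X|\ge 3$, and let $\mathcal R$ and $\mathcal Q$ be the sets of triples and quads displayed by $\mathcal N$. Let $a,b,c\in X$ be distinct. Then $\{a,b,c\}$ is a double-reticulated cherry of $\mathcal N$ with reticulation leaf $b$ if and only if: (i) $ab|x\in\mathcal R$ for all $x\in X-\{a,b\}$, $bc|x\in\mathcal R$ for all $x\in X-\{b,c\}$, and $ac|b\notin\mathcal R$; (ii) there is no $x\in X-\{a,b,c\}$ such that any of $(x,b,a,c)$, $(x,b,c,a)$, $(x,a,b,c)$, $(x,c,b,a)$ lies in $\mathcal Q$; (iii) if there exists $x\in X-\{a,b,c\}$ with $ac|x\in\mathcal R$, then $(a,b,c,x)\in\mathcal Q$ and $(c,b,a,x)\in\mathcal Q$.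
   Context: Phylogenetic network on $X$ (rooted, binary): rooted acyclic digraph without parallel arcs; root has in-degree $0$, out-degree $2$; leaves (out-degree $0$) have in-degree $1$ and form $X$; other vertices are tree vertices (in-degree $1$, out-degree $2$) or reticulations (in-degree $2$, out-degree $1$). A reticulation arc $(u,v)$ is a shortcut if another directed path from $u$ to $v$ exists. Tree-child: every non-leaf vertex has a child that is a tree vertex or leaf; normal: tree-child with no shortcuts. $p_x$ is the parent of leaf $x$. $\{a,b\}$ is a reticulated cherry with reticulation leaf $b$ if $p_b$ is a reticulation and $(p_a,p_b)$ is an arc. $\{a,b,c\}$ is a double-reticulated cherry with reticulation leaf $b$ if $p_b$ is a reticulation and both $\{a,b\}$ and $\{b,c\}$ are reticulated cherries (i.e. the two parents of $p_b$ are $p_a$ and $p_c$). A caterpillar $(x_1,\dots,x_n)$ is a phylogenetic tree in which $x_1,x_2$ share a parent and for $2\le i\le n-1$ the parent of $x_{i+1}$ is the parent of the parent of $x_i$; $(x_1,x_2,\dots)$ and $(x_2,x_1,\dots)$ coincide. Triples: caterpillars on 3 leaves, written $x_1x_2|x_3$; quads: caterpillars on 4 leaves. A network displays a tree if the tree is obtained by deleting arcs and vertices and suppressing in-degree-one out-degree-one vertices. *)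

(* Defs.v *)
From mathcomp Require Import all_boot.
Set Implicit Arguments. Unset Strict Implicit. Unset Printing Implicit Defensive.

Section Networks.
Variable V : finType.
Variable E : rel V.   (* arc relation: E u v <=> (u,v) is an arc; no parallel arcs *)

Definition indeg (v : V) : nat := #|[set u | E u v]|.
Definition outdeg (v : V) : nat := #|[set w | E v w]|.

Definition is_leaf (v : V) : bool := (indeg v == 1) && (outdeg v == 0).
Definition tree_vertex (v : V) : bool := (indeg v == 1) && (outdeg v == 2).
Definition reticulation (v : V) : bool := (indeg v == 2) && (outdeg v == 1).

Definition leaves : {set V} := [set v | is_leaf v].

Definition acyclic : Prop := forall u v, E u v -> ~~ connect E v u.

Definition phylo_network (r : V) : Prop :=
  [/\ acyclic,
      indeg r = 0, outdeg r = 2 &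
      forall v, v != r -> [|| is_leaf v, tree_vertex v | reticulation v]].

Definition tree_child : Prop :=
  forall v, ~~ is_leaf v -> exists w, E v w && (tree_vertex w || is_leaf w).

Definition shortcut (u v : V) : Prop :=
  [/\ E u v, reticulation v & exists w, [/\ w != v, E u w & connect E w v]].

Definition normal_network (r : V) : Prop :=
  [/\ phylo_network r, tree_child & forall u v, ~ shortcut u v].

Definition reticulated_cherry (a b : V) : Prop :=
  exists pa pb, [/\ E pa a, E pb b, reticulation pb & E pa pb].

Definition double_reticulated_cherry (a b c : V) : Prop :=
  reticulated_cherry a b /\ reticulated_cherry c b.

(* Caterpillar (x_0,...,x_{n-1}) as a tree on node set {0,..,2n-2} (nats):
   node i < n is the leaf x_i; node n+j (j <= n-2) is internal;
   n+0 is the parent of x_0 and x_1; for 1 <= j <= n-2, n+j is the parent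
   of n+j-1 and of x_{j+1}.  The root is n+(n-2). *)
Definition cat_arcs (n : nat) : seq (nat * nat) :=
  (n, 0) :: (n, 1) ::
  flatten [seq [:: (n + j, n + j - 1); (n + j, j.+1)] | j <- iota 1 (n - 2)].

(* N displays the caterpillar xs: some subgraph of N is a subdivision of the
   caterpillar (i.e. the caterpillar is obtained by deleting arcs/vertices
   and suppressing in-degree-1 out-degree-1 vertices).  phi maps tree nodes
   to network vertices (leaves to the corresponding leaves), P s t lists the
   interior vertices of the directed path realizing tree arc (s,t). *)
Definition displays_caterpillar (xs : seq V) : Prop :=
  let n := size xs in
  [/\ 2 <= n, uniq xs, all (fun x => x \in leaves) xs &
   exists (phi : nat -> V) (P : nat -> nat -> seq V),
     [/\ map phi (iota 0 n) = xs,
         (forall s t, (s, t) \in cat_arcs n ->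
            path E (phi s) (rcons (P s t) (phi t))) &
         uniq (flatten [seq P st.1 st.2 | st <- cat_arcs n]
               ++ map phi (iota 0 (2 * n - 1)))]].

(* triple x1x2|x3 and quad (x1,x2,x3,x4) displayed by N *)
Definition triple_in (x1 x2 x3 : V) : Prop := displays_caterpillar [:: x1; x2; x3].
Definition quad_in (x1 x2 x3 x4 : V) : Prop :=
  displays_caterpillar [:: x1; x2; x3; x4].

End Networks.

(* Main.v *)
Require Import Defs.
From mathcomp Require Import all_boot.
From mathcomp Require Import zify.
Set Implicit Arguments. Unset Strict Implicit. Unset Printing Implicit Defensive.

Lemma perm3 (T : eqType) (l1 l2 l3 l4 : seq T) (a0 a1 a2 a3 a4 : T) :
  perm_eq (rcons l1 a0 ++ rcons l2 a1 ++ rcons l3 a3 ++ rcons l4 a2 ++ [:: a4])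
          (l1 ++ l2 ++ l3 ++ l4 ++ [:: a0; a1; a2; a3; a4]).
Proof.
apply/permP => q; rewrite -!cats1 !count_cat /=.
move: (count q l1) (count q l2) (count q l3) (count q l4) => c1 c2 c3 c4.
move: (nat_of_bool (q a0)) (nat_of_bool (q a1)) (nat_of_bool (q a2)) (nat_of_bool (q a3)) (nat_of_bool (q a4)).
move=> *; lia.
Qed.

Lemma perm4 (T : eqType) (l1 l2 l3 l4 l5 l6 : seq T) (a0 a1 a2 a3 a4 a5 a6 : T) :
  perm_eq (rcons l1 a0 ++ rcons l2 a1 ++ rcons l3 a4 ++ rcons l4 a2 ++ rcons l5 a5 ++ rcons l6 a3 ++ [:: a6])
          (l1 ++ l2 ++ l3 ++ l4 ++ l5 ++ l6 ++ [:: a0; a1; a2; a3; a4; a5; a6]).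
Proof.
apply/permP => q; rewrite -!cats1 !count_cat /=.
move: (count q l1) (count q l2) (count q l3) (count q l4) (count q l5) (count q l6) => c1 c2 c3 c4 c5 c6.
move: (nat_of_bool (q a0)) (nat_of_bool (q a1)) (nat_of_bool (q a2)) (nat_of_bool (q a3)) (nat_of_bool (q a4)) (nat_of_bool (q a5)) (nat_of_bool (q a6)).
move=> *; lia.
Qed.

Lemma permR3 (T : eqType) (l1 l2 l3 l4 : seq T) (a0 a1 a2 a3 a4 : T) :
  perm_eq (rev l1 ++ rev l2 ++ rev l3 ++ rev l4 ++ [:: a0; a1; a2; a3; a4])
          ((a0 :: l1) ++ (a1 :: l2) ++ (a3 :: l3) ++ (a2 :: l4) ++ [:: a4]).
Proof.
apply/permP => q; rewrite !count_cat !count_rev /=.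
move: (count q l1) (count q l2) (count q l3) (count q l4) => c1 c2 c3 c4.
move: (nat_of_bool (q a0)) (nat_of_bool (q a1)) (nat_of_bool (q a2)) (nat_of_bool (q a3)) (nat_of_bool (q a4)).
move=> *; lia.
Qed.

Lemma permR4 (T : eqType) (l1 l2 l3 l4 l5 l6 : seq T) (a0 a1 a2 a3 a4 a5 a6 : T) :
  perm_eq (rev l1 ++ rev l2 ++ rev l3 ++ rev l4 ++ rev l5 ++ rev l6 ++ [:: a0; a1; a2; a3; a4; a5; a6])
          ((a0 :: l1) ++ (a1 :: l2) ++ (a4 :: l3) ++ (a2 :: l4) ++ (a5 :: l5) ++ (a3 :: l6) ++ [:: a6]).
Proof.
apply/permP => q; rewrite !count_cat !count_rev /=.
move: (count q l1) (count q l2) (count q l3) (count q l4) (count q l5) (count q l6) => c1 c2 c3 c4 c5 c6.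
move: (nat_of_bool (q a0)) (nat_of_bool (q a1)) (nat_of_bool (q a2)) (nat_of_bool (q a3)) (nat_of_bool (q a4)) (nat_of_bool (q a5)) (nat_of_bool (q a6)).
move=> *; lia.
Qed.

Section Net.
Variable V : finType.
Variable E : rel V.
Variable r : V.
Hypothesis HN : normal_network E r.

Lemma acyc u v : E u v -> ~~ connect E v u.
Proof. by move: HN => [[h _ _ _] _ _]; apply: h. Qed.

Lemma root_in u : ~~ E u r.
Proof.
move: HN => [[_ h _ _] _ _]; apply/negP => Eur.
have : u \in [set u | E u r] by rewrite inE.
by move: h; rewrite /indeg => /eqP; rewrite cards_eq0 => /eqP ->; rewrite inE.
Qed.

Lemma vtype v : v != r -> [|| is_leaf E v, tree_vertex E v | reticulation E v].
Proof. by move: HN => [[_ _ _ h] _ _]; apply: h. Qed.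

Lemma tchild : tree_child E.
Proof. by case: HN. Qed.

Lemma nosc u v : ~ shortcut E u v.
Proof. by case: HN => _ _; apply. Qed.

Lemma noloop u : ~~ E u u.
Proof. by apply/negP => h; move: (acyc h); rewrite connect0. Qed.

Lemma conn_antisym u v : connect E u v -> connect E v u -> u = v.
Proof.
move=> /connectP [p Hp ->]; case: p Hp => [//|w p] /= /andP [Euw Hp] Hback.
have : connect E w u.
  by apply: connect_trans Hback; apply/connectP; exists p.
by move: (acyc Euw) => /negP.
Qed.

Lemma outdeg_le2 v : outdeg E v <= 2.
Proof.
case: (eqVneq v r) => [->|vr].
  by move: HN => [[_ _ -> _] _ _].
move: (vtype vr); rewrite /is_leaf /tree_vertex /reticulation.
by case/orP => [|/orP []] /andP [_ /eqP ->].
Qed.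

Lemma leaf_noout v w : is_leaf E v -> ~~ E v w.
Proof.
case/andP => _ /eqP h; apply/negP => Evw.
have : w \in [set w | E v w] by rewrite inE.
by move: h; rewrite /outdeg => /eqP; rewrite cards_eq0 => /eqP ->; rewrite inE.
Qed.

Lemma conn_leaf v x : is_leaf E v -> connect E v x -> x = v.
Proof.
move=> lv /connectP [[|w p] Hp ->] //=.
by move: Hp => /= /andP [h _]; move: (leaf_noout w lv); rewrite h.
Qed.

Lemma set3_card (A : {set V}) x y z :
  #|A| <= 2 -> x \in A -> y \in A -> z \in A -> x != y -> z = x \/ z = y.
Proof.
move=> hA hx hy hz xy.
case: (eqVneq z x) => [->|zx]; first by left.
case: (eqVneq z y) => [->|zy]; first by right.
have : #|[:: x; y; z]| <= #|A|.
  by apply: subset_leq_card; apply/subsetP => t; rewrite !inE => /orP [/eqP ->|/orP [] /eqP ->].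
rewrite (card_uniqP _) /= ?inE ?negb_or ?xy 1?eq_sym ?zx 1?eq_sym ?zy //.
by move=> h; move: (leq_trans h hA).
Qed.

Lemma child2 v u1 u2 k : E v u1 -> E v u2 -> u1 != u2 -> E v k -> k = u1 \/ k = u2.
Proof.
move=> h1 h2 h12 hk.
by apply: (@set3_card [set w | E v w]); rewrite ?inE //; apply: outdeg_le2.
Qed.

Lemma indeg1_par v u u' : indeg E v = 1 -> E u v -> E u' v -> u = u'.
Proof.
move=> /eqP /cards1P [x hx] h h'.
have : u \in [set u | E u v] by rewrite inE.
have : u' \in [set u | E u v] by rewrite inE.
by rewrite hx !inE => /eqP -> /eqP ->.
Qed.

Lemma ret_par v u1 u2 k : reticulation E v -> E u1 v -> E u2 v -> u1 != u2 -> E k v ->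
  k = u1 \/ k = u2.
Proof.
case/andP => /eqP hi _ h1 h2 h12 hk.
rewrite /indeg in hi; by apply: (@set3_card [set w | E w v]); rewrite ?inE ?hi.
Qed.

Lemma ret_pars v : reticulation E v -> exists u1 u2, [/\ E u1 v, E u2 v & u1 != u2].
Proof.
case/andP => /cards2P [x [y [xy h]]] _.
have hx : x \in [set w | E w v] by rewrite h !inE eqxx.
have hy : y \in [set w | E w v] by rewrite h !inE eqxx orbT.
by rewrite !inE in hx hy; exists x, y.
Qed.

Lemma outdeg2_ch v u : outdeg E v = 2 -> E v u -> exists w, E v w /\ w != u.
Proof.
move=> /eqP /cards2P [x [y [xy h]]] Evu.
have hx : x \in [set w | E v w] by rewrite h !inE eqxx.
have hy : y \in [set w | E v w] by rewrite h !inE eqxx orbT.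
rewrite !inE in hx hy.
case: (eqVneq x u) => [xu|xu]; last by exists x.
by exists y; split => //; rewrite -xu eq_sym.
Qed.

Lemma nonroot_in v : v != r -> exists u, E u v.
Proof.
move=> vr; have : 0 < indeg E v.
  by move: (vtype vr); rewrite /is_leaf /tree_vertex /reticulation;
     case/orP => [|/orP []] /andP [/eqP -> _].
by rewrite /indeg card_gt0 => /set0Pn [u]; rewrite inE; exists u.
Qed.


Definition sw (f : V -> V) := f r = r /\ forall v, v != r -> E (f v) v.
Definition anc (f : V -> V) x u := fconnect f x u.

Lemma ancP f x u : reflect (exists n, iter n f x = u) (anc f x u).
Proof.
apply: (iffP idP) => [h|[n <-]]; last exact: fconnect_iter.
by exists (findex f x u); apply: iter_findex.
Qed.

Lemma anc_refl f x : anc f x x.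
Proof. exact: connect0. Qed.

Lemma anc_trans f x y z : anc f x y -> anc f y z -> anc f x z.
Proof. exact: connect_trans. Qed.

Lemma anc_fx f x : anc f x (f x).
Proof. by apply/ancP; exists 1. Qed.

Lemma anc_eq f x y : f x = y -> anc f x y.
Proof. by move=> <-; apply/ancP; exists 1. Qed.

Lemma anc_f f x u : anc f (f x) u -> anc f x u.
Proof. by apply: anc_trans; apply: anc_fx. Qed.

Lemma anc_step f x u : anc f x u -> u = x \/ anc f (f x) u.
Proof.
case/ancP => [[|n] <-]; first by left.
by right; apply/ancP; exists n; rewrite iterSr.
Qed.

Lemma anc_total f x u u' : anc f x u -> anc f x u' -> anc f u u' || anc f u' u.
Proof.
case/ancP => i <- /ancP [j <-].
case: (leqP i j) => hij.
  by apply/orP; left; apply/ancP; exists (j - i); rewrite -iterD subnK.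
by apply/orP; right; apply/ancP; exists (i - j); rewrite -iterD subnK // ltnW.
Qed.

Lemma before_findex (g : V -> V) (x t : V) i : i < findex g x t -> iter i g x != t.
Proof.
move=> hi; apply/eqP => h.
have ht : fconnect g x t by rewrite -h; apply: fconnect_iter.
have := findex_max ht => ho.
have := findex_iter (ltn_trans hi ho); rewrite h => e.
by rewrite e ltnn in hi.
Qed.

Section Sw.
Variable f : V -> V.
Hypothesis Hf : sw f.

Lemma sw_E v : v != r -> E (f v) v.
Proof. by case: Hf => _; apply. Qed.

Lemma sw_r : f r = r.
Proof. by case: Hf. Qed.

Lemma iter_r n : iter n f r = r.
Proof. by elim: n => //= n ->; apply: sw_r. Qed.

Lemma anc_connect x u : anc f x u -> connect E u x.
Proof.
case/ancP => n <-; elim: n => [|n IH] /=; first exact: connect0.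
case: (eqVneq (iter n f x) r) => [hr|hr]; first by rewrite hr sw_r -hr.
by apply: connect_trans IH; apply: connect1; apply: sw_E.
Qed.

Lemma anc_antisym x u : anc f x u -> anc f u x -> x = u.
Proof.
by move=> h1 h2; apply: conn_antisym; apply: anc_connect.
Qed.

Lemma anc_ne x u : anc f x u -> x != u -> anc f (f x) u.
Proof. by case/anc_step => [->|//]; rewrite eqxx. Qed.

Lemma child_step x u : anc f x u -> x != u ->
  exists k, [/\ f k = u, k != u, E u k & anc f x k].
Proof.
case/ancP => n; elim: n x => [|n IH] x; first by move=> /= -> ; rewrite eqxx.
rewrite iterSr => hx xu.
case: (eqVneq (f x) u) => [fxu|fxu].
  have xr : x != r by apply: contra xu => /eqP xr; rewrite -fxu xr sw_r.
  by exists x; split => //; [rewrite -fxu; apply: sw_E | apply: anc_refl].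
have [k [h1 h2 h3 h4]] := IH (f x) (esym (esym hx)) fxu.
by exists k; split => //; apply: anc_f.
Qed.

Lemma anc_leaf x v : is_leaf E v -> anc f x v -> x = v.
Proof. by move=> lv /anc_connect; apply: conn_leaf. Qed.

Lemma par1 v u : indeg E v = 1 -> E u v -> f v = u.
Proof.
move=> hi Euv; have vr : v != r by apply: contraTneq Euv => ->; apply: root_in.
by apply: (indeg1_par hi) => //; apply: sw_E.
Qed.

Lemma E_nanc u w : E u w -> ~~ anc f u w.
Proof. by move=> h; apply/negP => /anc_connect; apply/negP; apply: acyc. Qed.

Lemma anc_root x : anc f x r.
Proof.
have [n] := ubnP #|[set u | connect E u x]|; elim: n x => // n IH x hx.
case: (eqVneq x r) => [->|xr]; first exact: anc_refl.
apply: anc_f; apply: IH.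
have hsub : [set u | connect E u (f x)] \proper [set u | connect E u x].
  apply/properP; split.
    apply/subsetP => u; rewrite !inE => h; apply: connect_trans h _.
    by apply: connect1; apply: sw_E.
  exists x; rewrite !inE ?connect0 //.
  by apply: acyc; apply: sw_E.
by rewrite (leq_trans (proper_card hsub)).
Qed.

Lemma lca x y : exists m, [/\ anc f x m, anc f y m &
  forall t, anc f x t -> anc f y t -> anc f m t].
Proof.
have ex : exists n, anc f y (iter n f x).
  by exists (findex f x r); rewrite iter_findex ?anc_root //; apply: anc_root.
case: (ex_minnP ex) => n hn hmin.
exists (iter n f x); split => //; first by apply: fconnect_iter.
move=> t /ancP [j <-] hj; apply/ancP; exists (j - n).
by rewrite -iterD subnK //; apply: hmin.
Qed.

End Sw.

Definition f0 v := odflt v [pick u | E u v].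

Lemma sw_f0 : sw f0.
Proof.
split.
  rewrite /f0; case: pickP => //= u h; by move: (root_in u); rewrite h.
move=> v vr; rewrite /f0; case: pickP => [u //|h].
by have [u Euv] := nonroot_in vr; move: (h u); rewrite Euv.
Qed.

Definition upd (f : V -> V) t s := fun v => if v == t then s else f v.

Lemma sw_upd f t s : sw f -> E s t -> sw (upd f t s).
Proof.
move=> [h1 h2] Est; have tr : t != r by apply: contraTneq Est => ->; apply: root_in.
split; first by rewrite /upd eq_sym (negbTE tr).
by move=> v vr; rewrite /upd; case: eqP => [->|_] //; apply: h2.
Qed.

Lemma upd_at f t s : upd f t s t = s.
Proof. by rewrite /upd eqxx. Qed.

Lemma upd_ne f t s v : v != t -> upd f t s v = f v.
Proof. by rewrite /upd => /negbTE ->. Qed.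

Lemma iter_upd f t s x n : (forall i, i < n -> iter i f x != t) ->
  iter n (upd f t s) x = iter n f x.
Proof.
elim: n => [|n IH] h //=; rewrite IH; last by move=> i hi; apply: h; apply: ltnW.
by rewrite upd_ne // h.
Qed.

Lemma upd_same f t s x u : ~~ anc f x t -> anc (upd f t s) x u = anc f x u.
Proof.
move=> hn.
have hi : forall n, iter n (upd f t s) x = iter n f x.
  move=> n; apply: iter_upd => i _; apply: contraNneq hn => <-.
  exact: fconnect_iter.
apply/ancP/ancP => -[n hn']; exists n; by rewrite -hn' hi.
Qed.

Lemma iter_upd2 f t s x n : (forall i, i < n -> iter i (upd f t s) x != t) ->
  iter n (upd f t s) x = iter n f x.
Proof.
elim: n => [|n IH] h //=; rewrite -IH; last by move=> i hi; apply: h; apply: ltnW.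
by rewrite upd_ne // h.
Qed.

Lemma upd_t f t s x : anc (upd f t s) x t = anc f x t.
Proof.
apply/idP/idP => h.
  have e := iter_findex h; apply/ancP; exists (findex (upd f t s) x t).
  rewrite -(@iter_upd2 f t s) // => i hi; exact: before_findex.
have e := iter_findex h; apply/ancP; exists (findex f x t).
rewrite iter_upd // => i hi; exact: before_findex.
Qed.


Inductive tch : V -> V -> Prop :=
| tch0 x : is_leaf E x -> tch x x
| tchS s s' x : E s s' -> indeg E s' = 1 -> tch s' x -> tch s x.

Lemma tch_leaf s x : tch s x -> is_leaf E x.
Proof. by elim. Qed.

Lemma tch_anc s x : tch s x -> forall f, sw f -> anc f x s.
Proof.
elim => [y _|s0 s' y h1 h2 _ IH] f Hf; first exact: anc_refl.
apply: anc_trans (IH f Hf) _; rewrite -(par1 Hf h2 h1); exact: anc_fx.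
Qed.

Lemma tch_par s x : tch s x -> x = s \/
  exists t, [/\ E t x, (forall f, sw f -> anc f t s) & (t = s \/ indeg E t = 1)].
Proof.
elim => [y _|s0 s' y h1 h2 _ IH]; first by left.
right; case: IH => [->|[t [ht1 ht2 ht3]]].
  by exists s0; split => //; [move=> f _; apply: anc_refl | left].
exists t; split => //.
  move=> f Hf; apply: anc_trans (ht2 f Hf) _; rewrite -(par1 Hf h2 h1); exact: anc_fx.
by right; case: ht3 => // ->.
Qed.

Lemma tch_ex s : exists x, tch s x.
Proof.
have [n] := ubnP #|[set u | connect E s u]|; elim: n s => // n IH s hs.
case: (boolP (is_leaf E s)) => ls; first by exists s; apply: tch0.
have [w /andP [Esw hw]] := tchild ls.
have hw1 : indeg E w = 1 by move: hw => /orP [] /andP [/eqP -> _].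
have [x hx] : exists x, tch w x.
  apply: IH.
  have hsub : [set u | connect E w u] \proper [set u | connect E s u].
    apply/properP; split.
      by apply/subsetP => u; rewrite !inE; apply: connect_trans; apply: connect1.
    exists s; rewrite !inE ?connect0 //; exact: acyc.
  by rewrite (leq_trans (proper_card hsub)).
by exists x; apply: (tchS Esw).
Qed.

Definition Tr f x y z := exists v, [/\ anc f x v, anc f y v & ~~ anc f z v].

Definition Qd f x1 x2 x3 x4 := exists v1 v2,
  [/\ anc f x1 v1, anc f x2 v1, ~~ anc f x3 v1 & ~~ anc f x4 v1] /\
  [/\ anc f x1 v2, anc f x2 v2, anc f x3 v2 & ~~ anc f x4 v2].

Lemma Tr_sym f x y z : Tr f x y z -> Tr f y x z.
Proof. by case=> v [h1 h2 h3]; exists v. Qed.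

Lemma Tri f x y z : sw f -> is_leaf E x -> is_leaf E y -> is_leaf E z ->
  x != y -> y != z -> x != z ->
  Tr f x y z \/ Tr f y z x \/ Tr f x z y.
Proof.
move=> Hf lx ly lz xy yz xz.
have [m [hxm hym hm]] := lca Hf x y.
case: (boolP (anc f z m)) => hzm; last by left; exists m.
have [n [hyn hzn hn]] := lca Hf y z.
have hnm := hn m hym hzm.
case: (boolP (anc f x n)) => hxn; last by right; left; exists n.
have e : m = n by apply: (anc_antisym Hf) => //; apply: hm.
subst n.
have xm : x != m by apply: contraNneq xy => e; subst m; rewrite (anc_leaf Hf lx hym).
have ym : y != m by apply: contraNneq xy => e; subst m; rewrite (anc_leaf Hf ly hxm).
have zm : z != m by apply: contraNneq yz => e; subst m; rewrite (anc_leaf Hf lz hym).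
have [kx [fkx kxm Emkx hkx]] := child_step Hf hxm xm.
have [ky [fky kym Emky hky]] := child_step Hf hym ym.
have [kz [fkz kzm Emkz hkz]] := child_step Hf hzm zm.
have kxy : kx != ky.
  apply/eqP => e; subst ky.
  have h := hm kx hkx hky.
  by move: kxm; rewrite (anc_antisym Hf h) ?eqxx // -fkx; apply: anc_fx.
have kzy : kz != ky.
  apply/eqP => e; subst ky.
  have h := hn kz hky hkz.
  by move: kzm; rewrite (anc_antisym Hf h) ?eqxx // -fkz; apply: anc_fx.
case: (child2 Emkx Emky kxy Emkz) => e; last by rewrite e eqxx in kzy.
subst kz; right; right; exists kx; split => //.
apply/negP => hykx.
have h := hm kx hkx hykx.
by move: kxm; rewrite (anc_antisym Hf h) ?eqxx // -fkx; apply: anc_fx.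
Qed.


Lemma path_zip (e : rel V) x p u w : path e x p -> (u, w) \in zip (x :: p) p -> e u w.
Proof.
elim: p x => [|y p IH] x //= /andP [hxy hp]; rewrite inE => /orP [/eqP [-> ->] //|h].
exact: IH hp h.
Qed.

Lemma zip_path (e : rel V) x p :
  (forall u w, (u, w) \in zip (x :: p) p -> e u w) -> path e x p.
Proof.
elim: p x => [|y p IH] x //= h; rewrite h ?inE ?eqxx //=.
by apply: IH => u w hw; apply: h; rewrite inE hw orbT.
Qed.

Lemma uniq_snd (L : seq (V * V)) u u' w :
  uniq (map snd L) -> (u, w) \in L -> (u', w) \in L -> u = u'.
Proof.
elim: L => [|[a b] L IH] //= /andP [hn hu]; rewrite !inE.
case/orP => [/eqP [e1 e2]|h1] /orP [/eqP [e3 e4]|h2].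
- by rewrite e1 e3.
- by move: hn; rewrite -e2; move: (map_f snd h2) => /= ->.
- by move: hn; rewrite -e4; move: (map_f snd h1) => /= ->.
- exact: IH.
Qed.

Definition blk_seq (blk : V * seq V * V) := rcons blk.1.2 blk.2.
Definition blk_arcs (blk : V * seq V * V) := zip (blk.1.1 :: blk_seq blk) (blk_seq blk).

Lemma emb_sw (B : seq (V * seq V * V)) :
  (forall blk, blk \in B -> path E blk.1.1 (blk_seq blk)) ->
  uniq (flatten (map blk_seq B)) ->
  exists f, sw f /\ forall blk, blk \in B -> path (fun u w => f w == u) blk.1.1 (blk_seq blk).
Proof.
move=> hp hu.
pose AL := flatten (map blk_arcs B).
have hAL : forall u w, (u, w) \in AL -> E u w.
  move=> u w /flattenP [l /mapP [blk hb ->]] h.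
  exact: (path_zip (hp blk hb)).
have hsnd : map snd AL = flatten (map blk_seq B).
  rewrite /AL map_flatten -map_comp; congr flatten; apply: eq_map => blk /=.
  by rewrite /blk_arcs; apply: unzip2_zip => /=.
pose f v := if [pick u | (u, v) \in AL] is Some u then u else f0 v.
have hf : forall u w, (u, w) \in AL -> f w = u.
  move=> u w h; rewrite /f; case: pickP => [u' h'|/(_ u)]; last by rewrite h.
  by apply: (@uniq_snd AL) h' h; rewrite hsnd.
exists f; split.
  split.
    rewrite /f; case: pickP => [u h|_]; last by case: sw_f0.
    by move: (root_in u); rewrite (hAL _ _ h).
  move=> v vr; rewrite /f; case: pickP => [u h|_]; first exact: hAL.
  by case: sw_f0 => _; apply.
move=> blk hb; apply: zip_path => u w h; apply/eqP; apply: hf.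
by apply/flattenP; exists (blk_arcs blk) => //; apply: map_f.
Qed.

Lemma climb f x p : path (fun u w => f w == u) x p ->
  anc f (last x p) x /\ forall v, anc f (last x p) v -> v \in x :: p \/ anc f x v.
Proof.
elim: p x => [|w p IH] x /=.
  by move=> _; split => [|v h]; [apply: anc_refl | right].
case/andP => /eqP hw hp; have [h1 h2] := IH w hp; split.
  by apply: anc_trans h1 _; rewrite -hw; apply: anc_fx.
move=> v /h2 [h|h]; first by left; rewrite inE h orbT.
case: (anc_step h) => [->|h']; first by left; rewrite !inE eqxx orbT.
by right; rewrite -hw.
Qed.

Lemma uniq_suffix (s t : seq V) : uniq (s ++ t) -> uniq t.
Proof. by rewrite cat_uniq => /and3P []. Qed.

Lemma uniq_notin (s t : seq V) a : uniq (s ++ t) -> a \in t -> a \notin s.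
Proof.
rewrite cat_uniq => /and3P [_ h _] ha; apply/negP => hs.
by move/hasPn: h => /(_ a ha); rewrite hs.
Qed.

Lemma uniq_neq (s : seq V) x0 i j : uniq s -> i < size s -> j < size s -> i != j ->
  nth x0 s i != nth x0 s j.
Proof.
move=> /(uniqP x0) h hi hj; apply: contra => /eqP e; apply/eqP; exact: h.
Qed.

Lemma path_last_conn x p : path E x p -> connect E x (last x p).
Proof. by move=> h; apply: (path_connect h); apply: mem_last. Qed.

Lemma disp3_sw x y z : displays_caterpillar E [:: x; y; z] ->
  exists f, sw f /\ Tr f x y z.
Proof.
case=> _ _ _ [phi [P [hmap hpath hu]]].
have ca : cat_arcs 3 = [:: (3,0); (3,1); (4,3); (4,2)] by reflexivity.
have io : iota 0 (2 * 3 - 1) = [:: 0; 1; 2; 3; 4] by reflexivity.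
rewrite ca io /= cats0 -!catA in hu; rewrite ca in hpath.
move: hmap => /= [e0 e1 e2]; subst x y z.
have p30 := hpath 3 0 isT; have p31 := hpath 3 1 isT.
have p43 := hpath 4 3 isT; have p42 := hpath 4 2 isT.
pose B := [:: (phi 3, P 3 0, phi 0); (phi 3, P 3 1, phi 1);
              (phi 4, P 4 3, phi 3); (phi 4, P 4 2, phi 2)].
have [f [Hf hB]] : exists f, sw f /\ forall blk, blk \in B ->
     path (fun u w => f w == u) blk.1.1 (blk_seq blk).
  apply: emb_sw.
    by move=> blk; rewrite !inE => /or4P [] /eqP -> //=.
  have hp : perm_eq (flatten (map blk_seq B) ++ [:: phi 4])
     (P 3 0 ++ P 3 1 ++ P 4 3 ++ P 4 2 ++ [:: phi 0; phi 1; phi 2; phi 3; phi 4]).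
    by rewrite /= /blk_seq /= cats0 -!catA; apply: perm3.
  by rewrite -(perm_uniq hp) in hu; move: hu; rewrite cat_uniq => /andP [].
have hu4 := uniq_suffix (uniq_suffix (uniq_suffix hu)).
have hu5 := uniq_suffix hu4.
have n34 : phi 3 != phi 4 := uniq_neq (phi 0) hu5 (i := 3) (j := 4) isT isT isT.
have n32 : phi 3 != phi 2 := uniq_neq (phi 0) hu5 (i := 3) (j := 2) isT isT isT.
have c30 : _ := climb (hB (phi 3, P 3 0, phi 0) _); rewrite !inE eqxx ?orbT in c30.
have c31 : _ := climb (hB (phi 3, P 3 1, phi 1) _); rewrite !inE eqxx ?orbT in c31.
have c42 : _ := climb (hB (phi 4, P 4 2, phi 2) _); rewrite !inE eqxx ?orbT in c42.
rewrite /blk_seq /= !last_rcons in c30 c31 c42.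
exists f; split => //; exists (phi 3); split.
- by case: (c30 isT).
- by case: (c31 isT).
apply/negP => h; case: (c42 isT) => _ /(_ _ h) [].
  rewrite inE mem_rcons inE => /or3P [/eqP e| /eqP e|hin].
  - by rewrite e eqxx in n34.
  - by rewrite e eqxx in n32.
  - have hin5 : phi 3 \in [:: phi 0; phi 1; phi 2; phi 3; phi 4] by rewrite !inE eqxx !orbT.
    by move: (uniq_notin hu4 hin5); rewrite hin.
move/(anc_connect Hf) => h1.
have h2 := path_last_conn p43; rewrite last_rcons in h2.
by rewrite (conn_antisym h1 h2) eqxx in n34.
Qed.


Lemma not_anc_blk f s q t v : sw f -> path (fun u w => f w == u) s (rcons q t) ->
  v != s -> v != t -> v \notin q -> connect E s v -> ~~ anc f t v.
Proof.
move=> Hf hp n1 n2 n3 hc; apply/negP => h.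
case: (climb hp) => _; rewrite last_rcons => /(_ _ h) [].
  by rewrite inE mem_rcons inE (negbTE n1) (negbTE n2) (negbTE n3).
by move/(anc_connect Hf) => h'; move: n1; rewrite (conn_antisym h' hc) eqxx.
Qed.

Lemma disp4_sw x1 x2 x3 x4 : displays_caterpillar E [:: x1; x2; x3; x4] ->
  exists f, sw f /\ Qd f x1 x2 x3 x4.
Proof.
case=> _ _ _ [phi [P [hmap hpath hu]]].
have ca : cat_arcs 4 = [:: (4,0); (4,1); (5,4); (5,2); (6,5); (6,3)] by reflexivity.
have io : iota 0 (2 * 4 - 1) = [:: 0; 1; 2; 3; 4; 5; 6] by reflexivity.
rewrite ca io /= cats0 -!catA in hu; rewrite ca in hpath.
move: hmap => /= [e0 e1 e2 e3]; subst x1 x2 x3 x4.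
have p40 := hpath 4 0 isT; have p41 := hpath 4 1 isT.
have p54 := hpath 5 4 isT; have p52 := hpath 5 2 isT.
have p65 := hpath 6 5 isT; have p63 := hpath 6 3 isT.
pose B := [:: (phi 4, P 4 0, phi 0); (phi 4, P 4 1, phi 1);
              (phi 5, P 5 4, phi 4); (phi 5, P 5 2, phi 2);
              (phi 6, P 6 5, phi 5); (phi 6, P 6 3, phi 3)].
have [f [Hf hB]] : exists f, sw f /\ forall blk, blk \in B ->
     path (fun u w => f w == u) blk.1.1 (blk_seq blk).
  apply: emb_sw.
    by move=> blk; rewrite !inE => /orP [|/orP [|/orP [|/orP [|/orP []]]]] /eqP -> //=.
  have hp : perm_eq (flatten (map blk_seq B) ++ [:: phi 6])
     (P 4 0 ++ P 4 1 ++ P 5 4 ++ P 5 2 ++ P 6 5 ++ P 6 3 ++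
        [:: phi 0; phi 1; phi 2; phi 3; phi 4; phi 5; phi 6]).
    by rewrite /= /blk_seq /= cats0 -!catA; apply: perm4.
  by rewrite -(perm_uniq hp) in hu; move: hu; rewrite cat_uniq => /andP [].
have hu52 := uniq_suffix (uniq_suffix (uniq_suffix hu)).
have hu63 := uniq_suffix (uniq_suffix hu52).
have hu7 := uniq_suffix hu63.
have n45 : phi 4 != phi 5 := uniq_neq (phi 0) hu7 (i := 4) (j := 5) isT isT isT.
have n46 : phi 4 != phi 6 := uniq_neq (phi 0) hu7 (i := 4) (j := 6) isT isT isT.
have n56 : phi 5 != phi 6 := uniq_neq (phi 0) hu7 (i := 5) (j := 6) isT isT isT.
have n42 : phi 4 != phi 2 := uniq_neq (phi 0) hu7 (i := 4) (j := 2) isT isT isT.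
have n43 : phi 4 != phi 3 := uniq_neq (phi 0) hu7 (i := 4) (j := 3) isT isT isT.
have n53 : phi 5 != phi 3 := uniq_neq (phi 0) hu7 (i := 5) (j := 3) isT isT isT.
have in4 : phi 4 \in [:: phi 5; phi 6] ++ [:: phi 0; phi 1; phi 2; phi 3; phi 4; phi 5; phi 6].
  by rewrite !inE eqxx !orbT.
have in5 : phi 5 \in [:: phi 5; phi 6] ++ [:: phi 0; phi 1; phi 2; phi 3; phi 4; phi 5; phi 6].
  by rewrite !inE eqxx !orbT.
have m4_52 : phi 4 \notin P 5 2.
  apply: (uniq_notin hu52); rewrite ?mem_cat !inE eqxx !orbT //.
have m4_63 : phi 4 \notin P 6 3.
  apply: (uniq_notin hu63); rewrite ?mem_cat !inE eqxx !orbT //.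
have m5_63 : phi 5 \notin P 6 3.
  apply: (uniq_notin hu63); rewrite ?mem_cat !inE eqxx !orbT //.
have b40 := hB (phi 4, P 4 0, phi 0) (mem_head _ _).
have b41 : _ := hB (phi 4, P 4 1, phi 1); rewrite !inE eqxx ?orbT in b41.
have b54 : _ := hB (phi 5, P 5 4, phi 4); rewrite !inE eqxx ?orbT in b54.
have b52 : _ := hB (phi 5, P 5 2, phi 2); rewrite !inE eqxx ?orbT in b52.
have b63 : _ := hB (phi 6, P 6 3, phi 3); rewrite !inE eqxx ?orbT in b63.
have b40' := b40; have b41' := b41 isT; have b54' := b54 isT; have b52' := b52 isT.
have b63' := b63 isT.
rewrite /blk_seq /= in b40' b41' b54' b52' b63'.
have c40 := (climb b40').1; have c41 := (climb b41').1.
have c54 := (climb b54').1; have c52 := (climb b52').1.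
rewrite !last_rcons in c40 c41 c54 c52.
have k54 := path_last_conn p54; have k65 := path_last_conn p65.
rewrite !last_rcons in k54 k65.
exists f; split => //; exists (phi 4), (phi 5); split; split => //.
- by apply: (not_anc_blk Hf b52').
- by apply: (not_anc_blk Hf b63') => //; exact: connect_trans k65 k54.
- exact: anc_trans c40 c54.
- exact: anc_trans c41 c54.
- by apply: (not_anc_blk Hf b63').
Qed.


Definition seg (f : V -> V) (x m : V) := traject f x (findex f x m).

Lemma uniq_catI (s t : seq V) : uniq s -> uniq t ->
  (forall a, a \in s -> a \in t -> False) -> uniq (s ++ t).
Proof.
move=> hs ht h; rewrite cat_uniq hs ht andbT /=; apply/hasPn => a ha.
by apply/negP => hs'; apply: (h a).
Qed.

Section Seg.
Variable f : V -> V.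
Hypothesis Hf : sw f.

Lemma seg_mem x m t : anc f x m -> t \in seg f x m -> [/\ anc f x t, anc f t m & t != m].
Proof.
move=> hxm /trajectP [i hi ->]; split.
- exact: fconnect_iter.
- apply/ancP; exists (findex f x m - i).
  by rewrite -iterD subnK ?iter_findex // ltnW.
- exact: before_findex.
Qed.

Lemma seg_uniq x m : anc f x m -> uniq (seg f x m).
Proof.
move=> hxm; apply/(uniqP x) => i j; rewrite !inE size_traject => hi hj.
rewrite !nth_traject //.
have key : forall i j, i < findex f x m -> j < findex f x m ->
    iter i f x = iter j f x -> i < j -> False.
  move=> {}i {}j {}hi {}hj e lt.
  have : iter (findex f x m - j + i) f x != m.
    by apply: before_findex; rewrite -ltn_subRL subKn // ltnW.
  by rewrite iterD e -iterD subnK ?iter_findex ?eqxx // ltnW.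
move=> e; case: (ltngtP i j) => // h.
  by case: (key i j hi hj e h).
by case: (key j i hj hi (esym e) h).
Qed.

Lemma path_rev_traject x n : (forall i, i < n -> iter i f x != r) ->
  path E (iter n f x) (rev (traject f x n)).
Proof.
elim: n => [|n IH] h //.
rewrite trajectSr rev_rcons /=; apply/andP; split.
  by apply: sw_E => //; apply: h.
by apply: IH => i hi; apply: h; apply: ltnW.
Qed.

Lemma seg_path x m : anc f x m -> path E m (rev (seg f x m)).
Proof.
move=> hxm; have e0 := iter_findex hxm; set n := findex f x m in e0 *.
rewrite -{1}e0; apply: path_rev_traject => i hi; apply/negP => /eqP e.
have := before_findex hi; rewrite -/n -e0 -(subnK (ltnW hi)) iterD e (iter_r Hf).
by rewrite eqxx.
Qed.

Lemma seg_cons x m : anc f x m -> x != m -> seg f x m = x :: behead (seg f x m).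
Proof.
move=> hxm xm; rewrite /seg; case e: (findex f x m) => [|n] //.
by move: xm; rewrite -(iter_findex hxm) e /= eqxx.
Qed.

Lemma seg_path' x m : anc f x m -> x != m ->
  path E m (rcons (rev (behead (seg f x m))) x).
Proof.
by move=> h1 h2; rewrite -rev_cons -seg_cons //; apply: seg_path.
Qed.

Lemma sw_disp3 x y z : uniq [:: x; y; z] -> all (fun x => x \in leaves E) [:: x; y; z] ->
  Tr f x y z -> displays_caterpillar E [:: x; y; z].
Proof.
move=> hu hl [v [hxv hyv hzv]].
have [lx ly lz _] : [/\ is_leaf E x, is_leaf E y, is_leaf E z & True].
  by move: hl => /=; rewrite !inE => /and4P [].
move: hu => /=; rewrite !inE !negb_or => /andP [/andP [xy xz] /andP [yz _]].
have [m1 [hx1 hy1 h1]] := lca Hf x y.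
have h1v := h1 v hxv hyv.
have [m2 [h12 hz2 h2]] := lca Hf m1 z.
have xm1 : x != m1 by apply: contraNneq xy => e; subst m1; rewrite (anc_leaf Hf lx hy1).
have ym1 : y != m1 by apply: contraNneq xy => e; subst m1; rewrite (anc_leaf Hf ly hx1).
have m12 : m1 != m2.
  by apply: contraNneq hzv => e; subst m2; apply: anc_trans hz2 h1v.
have zm2 : z != m2.
  apply: contraNneq xz => e; subst m2.
  have e' := anc_leaf Hf lz h12; subst m1; by rewrite (anc_leaf Hf lz hx1).
pose sx := seg f x m1; pose sy := seg f y m1; pose s1 := seg f m1 m2; pose sz := seg f z m2.
split => //.
  by rewrite /= !inE !negb_or xy xz yz.
exists (fun k => nth x [:: x; y; z; m1; m2] k).
exists (fun s t => if (s == 3) && (t == 0) then rev (behead sx)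
  else if (s == 3) && (t == 1) then rev (behead sy)
  else if (s == 4) && (t == 3) then rev (behead s1) else rev (behead sz)).
have ca : cat_arcs 3 = [:: (3,0); (3,1); (4,3); (4,2)] by reflexivity.
have io : iota 0 (2 * 3 - 1) = [:: 0; 1; 2; 3; 4] by reflexivity.
split => //.
  move=> s t; rewrite ca !inE => /orP [|/orP [|/orP []]] /eqP [-> ->] /=;
    apply: seg_path' => //.
rewrite ca io /= cats0 -!catA.
rewrite (perm_uniq (permR3 _ _ _ _ _ _ _ _ _)).
rewrite /sx /sy /s1 /sz -!seg_cons //.
have Mx := @seg_mem x m1; have My := @seg_mem y m1.
have M1 := @seg_mem m1 m2; have Mz := @seg_mem z m2.
apply: uniq_catI; first exact: seg_uniq.
  apply: uniq_catI; first exact: seg_uniq.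
    apply: uniq_catI; first exact: seg_uniq.
      apply: uniq_catI; [exact: seg_uniq | by [] |].
      move=> a /(Mz _ hz2) [_ _ h] ; rewrite inE => /eqP e; by rewrite e eqxx in h.
    move=> a /(M1 _ h12) [ha1 ha2 ha3]; rewrite mem_cat inE => /orP [/(Mz _ hz2) [hb1 hb2 hb3]|/eqP e].
      by move: ha3; rewrite (anc_antisym Hf ha2 (h2 a ha1 hb1)) eqxx.
    by rewrite e eqxx in ha3.
  move=> a /(My _ hy1) [ha1 ha2 ha3]; rewrite !mem_cat inE => /orP [/(M1 _ h12) [hb1 hb2 hb3]|/orP [/(Mz _ hz2) [hb1 hb2 hb3]|/eqP e]].
  - by move: ha3; rewrite (anc_antisym Hf ha2 hb1) eqxx.
  - by move: hzv; rewrite (anc_trans hb1 (anc_trans ha2 h1v)).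
  - subst a; by move: m12; rewrite (anc_antisym Hf ha2 h12) eqxx.
move=> a /(Mx _ hx1) [ha1 ha2 ha3]; rewrite !mem_cat inE => /orP [/(My _ hy1) [hb1 hb2 hb3]|/orP [/(M1 _ h12) [hb1 hb2 hb3]|/orP [/(Mz _ hz2) [hb1 hb2 hb3]|/eqP e]]].
- by move: ha3; rewrite (anc_antisym Hf ha2 (h1 a ha1 hb1)) eqxx.
- by move: ha3; rewrite (anc_antisym Hf ha2 hb1) eqxx.
- by move: hzv; rewrite (anc_trans hb1 (anc_trans ha2 h1v)).
- subst a; by move: m12; rewrite (anc_antisym Hf ha2 h12) eqxx.
Qed.

Lemma sw_disp4 x1 x2 x3 x4 : uniq [:: x1; x2; x3; x4] ->
  all (fun x => x \in leaves E) [:: x1; x2; x3; x4] ->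
  Qd f x1 x2 x3 x4 -> displays_caterpillar E [:: x1; x2; x3; x4].
Proof.
move=> hu hl [v1 [v2 [[h11 h21 h31 h41] [h12 h22 h32 h42]]]].
have [l1 l2 l3 l4] : [/\ is_leaf E x1, is_leaf E x2, is_leaf E x3 & is_leaf E x4].
  by move: hl => /=; rewrite !inE => /and5P [].
have hu' := hu; move: hu' => /=; rewrite !inE !negb_or.
case/andP => /and3P [x12 x13 x14] /andP [/andP [x23 x24] /andP [x34 _]].
have [m1 [hx1 hy1 hm1]] := lca Hf x1 x2.
have m1v1 := hm1 v1 h11 h21; have m1v2 := hm1 v2 h12 h22.
have [m2 [hm12 hx3 hm2]] := lca Hf m1 x3.
have m2v2 := hm2 v2 m1v2 h32.
have [m3 [hm23 hx4 hm3]] := lca Hf m2 x4.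
have x1m1 : x1 != m1 by apply: contraNneq x12 => e; subst m1; rewrite (anc_leaf Hf l1 hy1).
have x2m1 : x2 != m1 by apply: contraNneq x12 => e; subst m1; rewrite (anc_leaf Hf l2 hx1).
have m12 : m1 != m2 by apply: contraNneq h31 => e; subst m2; apply: anc_trans hx3 m1v1.
have x3m2 : x3 != m2.
  apply: contraNneq x13 => e; subst m2.
  have e' := anc_leaf Hf l3 hm12; subst m1; by rewrite (anc_leaf Hf l3 hx1).
have m23 : m2 != m3 by apply: contraNneq h42 => e; subst m3; apply: anc_trans hx4 m2v2.
have x4m3 : x4 != m3.
  apply: contraNneq x34 => e; subst m3.
  have e' := anc_leaf Hf l4 hm23; subst m2; by rewrite (anc_leaf Hf l4 hx3).
pose s1 := seg f x1 m1; pose s2 := seg f x2 m1; pose c1 := seg f m1 m2.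
pose s3 := seg f x3 m2; pose c2 := seg f m2 m3; pose s4 := seg f x4 m3.
split => //.
exists (fun k => nth x1 [:: x1; x2; x3; x4; m1; m2; m3] k).
exists (fun s t => if (s == 4) && (t == 0) then rev (behead s1)
  else if (s == 4) && (t == 1) then rev (behead s2)
  else if (s == 5) && (t == 4) then rev (behead c1)
  else if (s == 5) && (t == 2) then rev (behead s3)
  else if (s == 6) && (t == 5) then rev (behead c2) else rev (behead s4)).
have ca : cat_arcs 4 = [:: (4,0); (4,1); (5,4); (5,2); (6,5); (6,3)] by reflexivity.
have io : iota 0 (2 * 4 - 1) = [:: 0; 1; 2; 3; 4; 5; 6] by reflexivity.
split => //.
  move=> s t; rewrite ca !inE => /orP [|/orP [|/orP [|/orP [|/orP []]]]] /eqP [-> ->] /=;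
    apply: seg_path' => //.
rewrite ca io /= cats0 -!catA.
rewrite (perm_uniq (permR4 _ _ _ _ _ _ _ _ _ _ _ _ _)).
rewrite /s1 /s2 /c1 /s3 /c2 /s4 -!seg_cons //.
have M1 := @seg_mem x1 m1; have M2 := @seg_mem x2 m1; have C1 := @seg_mem m1 m2.
have M3 := @seg_mem x3 m2; have C2 := @seg_mem m2 m3; have M4 := @seg_mem x4 m3.
have m13 := anc_trans hm12 hm23.
have below_m1 : forall a, anc f a m1 -> a != m1 ->
    a \in c1 ++ s3 ++ c2 ++ s4 ++ [:: m3] -> False.
  move=> a ha1 ha2; rewrite !mem_cat inE.
  case/orP => [/(C1 _ hm12) [hb1 _ _]|/orP [/(M3 _ hx3) [hb1 _ _]|
             /orP [/(C2 _ hm23) [hb1 _ _]|/orP [/(M4 _ hx4) [hb1 _ _]|/eqP e]]]].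
  - by move: ha2; rewrite (anc_antisym Hf ha1 hb1) eqxx.
  - by move: h31; rewrite (anc_trans hb1 (anc_trans ha1 m1v1)).
  - by move: m12; rewrite (anc_antisym Hf hm12 (anc_trans hb1 ha1)) eqxx.
  - by move: h41; rewrite (anc_trans hb1 (anc_trans ha1 m1v1)).
  - subst a; by move: m12; rewrite (anc_antisym Hf hm12 (anc_trans hm23 ha1)) eqxx.
have below_m2 : forall a, anc f a m2 -> a != m2 ->
    a \in c2 ++ s4 ++ [:: m3] -> False.
  move=> a ha1 ha2; rewrite !mem_cat inE.
  case/orP => [/(C2 _ hm23) [hb1 _ _]|/orP [/(M4 _ hx4) [hb1 _ _]|/eqP e]].
  - by move: ha2; rewrite (anc_antisym Hf ha1 hb1) eqxx.
  - by move: h42; rewrite (anc_trans hb1 (anc_trans ha1 m2v2)).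
  - subst a; by move: m23; rewrite (anc_antisym Hf hm23 ha1) eqxx.
apply: uniq_catI; first exact: seg_uniq.
  apply: uniq_catI; first exact: seg_uniq.
    apply: uniq_catI; first exact: seg_uniq.
      apply: uniq_catI; first exact: seg_uniq.
        apply: uniq_catI; first exact: seg_uniq.
          apply: uniq_catI; [exact: seg_uniq | by [] |].
          by move=> a /(M4 _ hx4) [_ _ h]; rewrite inE => /eqP e; rewrite e eqxx in h.
        move=> a /(C2 _ hm23) [ha1 ha2 ha3]; rewrite mem_cat inE.
        case/orP => [/(M4 _ hx4) [hb1 _ _]|/eqP e].
          by move: ha3; rewrite (anc_antisym Hf ha2 (hm3 a ha1 hb1)) eqxx.
        by rewrite e eqxx in ha3.
      move=> a /(M3 _ hx3) [ha1 ha2 ha3] h; apply: (below_m2 a ha2 ha3 h).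
    move=> a /(C1 _ hm12) [ha1 ha2 ha3]; rewrite mem_cat.
    case/orP => [/(M3 _ hx3) [hb1 _ _]|h]; last exact: (below_m2 a ha2 ha3 h).
    by move: ha3; rewrite (anc_antisym Hf ha2 (hm2 a ha1 hb1)) eqxx.
  move=> a /(M2 _ hy1) [ha1 ha2 ha3] h; exact: (below_m1 a ha2 ha3 h).
move=> a /(M1 _ hx1) [ha1 ha2 ha3]; rewrite mem_cat.
case/orP => [/(M2 _ hy1) [hb1 _ _]|h]; last exact: (below_m1 a ha2 ha3 h).
by move: ha3; rewrite (anc_antisym Hf ha2 (hm1 a ha1 hb1)) eqxx.
Qed.

End Seg.


Definition T3 x y z := exists f, sw f /\ Tr f x y z.
Definition Q4 x1 x2 x3 x4 := exists f, sw f /\ Qd f x1 x2 x3 x4.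

Lemma out1_ch v u u' : outdeg E v = 1 -> E v u -> E v u' -> u = u'.
Proof.
move=> /eqP /cards1P [x hx] h h'.
have : u \in [set w | E v w] by rewrite inE.
have : u' \in [set w | E v w] by rewrite inE.
by rewrite hx !inE => /eqP -> /eqP ->.
Qed.

Lemma leaf_ne v w u : is_leaf E v -> E w u -> v != w.
Proof. by move=> lv Ewu; apply: contraTneq Ewu => <-; apply: leaf_noout. Qed.

Lemma below_ret f p b x : sw f -> reticulation E p -> E p b -> is_leaf E b ->
  is_leaf E x -> anc f x p -> x = b.
Proof.
move=> Hf /andP [_ /eqP ho] Epb lb lx h.
have [k [_ _ Epk hk]] := child_step Hf h (leaf_ne lx Epb).
by rewrite (out1_ch ho Epk Epb) in hk; apply: (anc_leaf Hf lb hk).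
Qed.


Lemma leaf_indeg v : is_leaf E v -> indeg E v = 1.
Proof. by case/andP => /eqP. Qed.

Section Fwd.
Variables a b c pa pb pc : V.
Hypotheses (la : is_leaf E a) (lb : is_leaf E b) (lc : is_leaf E c)
  (ab : a != b) (bc : b != c) (ac : a != c)
  (Ea : E pa a) (Eb : E pb b) (Ec : E pc c) (Eab : E pa pb) (Ecb : E pc pb)
  (rb : reticulation E pb).

Lemma ch_below f y py x : sw f -> is_leaf E y -> E py y -> E py pb ->
  is_leaf E x -> anc f x py -> x = y \/ x = b.
Proof.
move=> Hf ly Ey Eyb lx h.
have [k [_ _ Ek hk]] := child_step Hf h (leaf_ne lx Ey).
case: (child2 Ey Eyb (leaf_ne ly Eb) Ek) => e; subst k.
  by left; apply: (anc_leaf Hf ly hk).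
by right; apply: (below_ret Hf rb Eb lb lx hk).
Qed.

Lemma ch_tr y py x : is_leaf E y -> E py y -> E py pb -> is_leaf E x -> x != y -> x != b ->
  exists f, [/\ sw f, f pb = py & Tr f y b x].
Proof.
move=> ly Ey Eyb lx xy xb.
have Hf := sw_upd sw_f0 Eyb; set f := upd f0 pb py in Hf *.
exists f; split => //; first exact: upd_at.
exists py; split.
- by rewrite -(par1 Hf (leaf_indeg ly) Ey); apply: anc_fx.
- apply: anc_trans (anc_fx f b) _; rewrite (par1 Hf (leaf_indeg lb) Eb).
  by apply: anc_trans (anc_fx f pb) _; rewrite /f upd_at; apply: anc_refl.
apply/negP => h; case: (ch_below Hf ly Ey Eyb lx h) => e.
  by rewrite e eqxx in xy.
by rewrite e eqxx in xb.
Qed.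

Lemma pac : pa != pc.
Proof.
apply/eqP => e; subst pc.
case: (child2 Ea Eab (leaf_ne la Eb) Ec) => e.
  by move: ac; rewrite e eqxx.
by move: (leaf_ne lc Eb); rewrite e eqxx.
Qed.

Lemma fpb f : sw f -> f pb = pa \/ f pb = pc.
Proof.
move=> Hf; apply: (ret_par rb Eab Ecb pac); apply: (sw_E Hf).
by apply: contraTneq Eab => ->; apply: root_in.
Qed.

Lemma anc_b_pb f : sw f -> anc f b pb.
Proof. by move=> Hf; rewrite -(par1 Hf (leaf_indeg lb) Eb); apply: anc_fx. Qed.

Lemma anc_y_py f y py : sw f -> is_leaf E y -> E py y -> anc f y py.
Proof. by move=> Hf ly Ey; rewrite -(par1 Hf (leaf_indeg ly) Ey); apply: anc_fx. Qed.

Lemma bchain f x v : sw f -> is_leaf E x -> x != b -> anc f x v -> anc f b v ->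
  anc f (f pb) v.
Proof.
move=> Hf lx xb hx hb.
have vb : v != b by apply: contraNneq xb => e; subst v; rewrite (anc_leaf Hf lb hx).
have vpb : v != pb.
  by apply: contraNneq xb => e; subst v; rewrite (below_ret Hf rb Eb lb lx hx).
case: (anc_step hb) => [e|]; first by rewrite e eqxx in vb.
rewrite (par1 Hf (leaf_indeg lb) Eb) => h2.
by case: (anc_step h2) => [e|//]; rewrite e eqxx in vpb.
Qed.

Lemma bup f x v : sw f -> is_leaf E x -> x != b -> anc f x v -> anc f b v ->
  anc f pa v \/ anc f pc v.
Proof.
move=> Hf lx xb hx hb; have := bchain Hf lx xb hx hb.
by case: (fpb Hf) => ->; [left | right].
Qed.

Lemma nTacb : ~ T3 a c b.
Proof.
case=> f [Hf [v [hav hcv hbv]]].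
case: (fpb Hf) => e.
  have va : a != v by apply: contraNneq ac => e'; subst v; rewrite (anc_leaf Hf la hcv).
  have := anc_ne hav va; rewrite (par1 Hf (leaf_indeg la) Ea) => h.
  move/negP: hbv; apply; apply: anc_trans (anc_b_pb Hf) _.
  by rewrite -e in h; apply: anc_f.
have vc : c != v by apply: contraNneq ac => e'; subst v; rewrite (anc_leaf Hf lc hav).
have := anc_ne hcv vc; rewrite (par1 Hf (leaf_indeg lc) Ec) => h.
move/negP: hbv; apply; apply: anc_trans (anc_b_pb Hf) _.
by rewrite -e in h; apply: anc_f.
Qed.

Lemma nQ1 x : is_leaf E x -> x != b -> forall f, sw f -> forall v,
  anc f x v -> anc f b v -> ~~ anc f a v -> ~~ anc f c v -> False.
Proof.
move=> lx xb f Hf v hx hb ha hc.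
case: (bup Hf lx xb hx hb) => h.
  by move/negP: ha; apply; apply: anc_trans h; apply: anc_y_py.
by move/negP: hc; apply; apply: anc_trans h; apply: anc_y_py.
Qed.

Lemma nQ3 x : is_leaf E x -> x != a -> x != b -> ~ Q4 x a b c.
Proof.
move=> lx xa xb [f [Hf [v1 [v2 [[h1 h2 h3 h4] [h5 h6 h7 h8]]]]]].
have va : a != v1 by apply: contraNneq xa => e; subst v1; rewrite (anc_leaf Hf la h1).
have hpa := anc_ne h2 va; rewrite (par1 Hf (leaf_indeg la) Ea) in hpa.
case: (fpb Hf) => e.
  move/negP: h3; apply; apply: anc_trans (anc_b_pb Hf) _.
  by apply: anc_f; rewrite e.
have := bchain Hf lx xb h5 h7; rewrite e => h.
by move/negP: h8; apply; apply: anc_trans h; apply: anc_y_py.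
Qed.

Lemma fwd_iii x : is_leaf E x -> x != a -> x != b -> x != c -> T3 a c x -> Q4 a b c x.
Proof.
move=> lx xa xb xc [f [Hf [v [hav hcv hxv]]]].
have Hg := sw_upd Hf Eab; set g := upd f pb pa in Hg *.
have nb : forall y, is_leaf E y -> y != b -> ~~ anc f y pb.
  by move=> y ly yb; apply/negP => h; move: yb; rewrite (below_ret Hf rb Eb lb ly h) eqxx.
have Sa : forall y u, is_leaf E y -> y != b -> anc g y u = anc f y u.
  by move=> y u ly yb; apply: upd_same; apply: nb.
have gpb : g pb = pa by rewrite /g upd_at.
have hbpa : anc g b pa by apply: anc_trans (anc_b_pb Hg) _; rewrite -gpb; apply: anc_fx.
exists g; split => //; exists pa, v; split; split.
- exact: anc_y_py.
- exact: hbpa.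
- apply/negP => h; case: (ch_below Hg la Ea Eab lc h) => e.
    by move: ac; rewrite e eqxx.
  by move: bc; rewrite e eqxx.
- apply/negP => h; case: (ch_below Hg la Ea Eab lx h) => e.
    by move: xa; rewrite e eqxx.
  by move: xb; rewrite e eqxx.
- by rewrite Sa.
- have va : a != v by apply: contraNneq ac => e; subst v; rewrite (anc_leaf Hf la hcv).
  have h := anc_ne (_ : anc g a v) va; rewrite (par1 Hg (leaf_indeg la) Ea) in h.
  apply: anc_trans hbpa (h _); by rewrite Sa.
- by rewrite Sa // eq_sym.
- by rewrite Sa.
Qed.

End Fwd.


Definition BH a b c : Prop :=
  [/\ (forall x, is_leaf E x -> x != a -> x != b -> T3 a b x),
      (forall x, is_leaf E x -> x != b -> x != c -> T3 b c x),
      ~ T3 a c b,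
      (forall x, is_leaf E x -> x != a -> x != b -> x != c ->
        ~ (Q4 x b a c \/ Q4 x b c a \/ Q4 x a b c \/ Q4 x c b a)) &
      (forall x, is_leaf E x -> x != a -> x != b -> x != c -> T3 a c x ->
        Q4 a b c x /\ Q4 c b a x)].

Lemma T3_sym x y z : T3 x y z -> T3 y x z.
Proof. by case=> f [Hf h]; exists f; split => //; apply: Tr_sym. Qed.

Lemma BH_sym a b c : BH a b c -> BH c b a.
Proof.
case=> H1 H2 H3 H4 H5; split.
- by move=> x lx xc xb; apply: T3_sym; apply: H2.
- by move=> x lx xb xa; apply: T3_sym; apply: H1.
- by move=> h; apply: H3; apply: T3_sym.
- move=> x lx xc xb xa h; apply: (H4 x lx xa xb xc).
  by case: h => [h|[h|[h|h]]]; [right; left | left | right; right; right | right; right; left].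
- move=> x lx xc xb xa h; have [h1 h2] := H5 x lx xa xb xc (T3_sym h); by split.
Qed.

Section Bwd.
Variables a b c : V.
Hypotheses (la : is_leaf E a) (lb : is_leaf E b) (lc : is_leaf E c)
  (ab : a != b) (bc : b != c) (ac : a != c) (HB : BH a b c).

Lemma H1 x : is_leaf E x -> x != a -> x != b -> T3 a b x.
Proof. by case: HB => h _ _ _ _; apply: h. Qed.
Lemma H2 x : is_leaf E x -> x != b -> x != c -> T3 b c x.
Proof. by case: HB => _ h _ _ _; apply: h. Qed.
Lemma H3 : ~ T3 a c b.
Proof. by case: HB. Qed.
Lemma H4 x : is_leaf E x -> x != a -> x != b -> x != c ->
        ~ (Q4 x b a c \/ Q4 x b c a \/ Q4 x a b c \/ Q4 x c b a).
Proof. by case: HB => _ _ _ h _; apply: h. Qed.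
Lemma H5 x : is_leaf E x -> x != a -> x != b -> x != c -> T3 a c x ->
        Q4 a b c x /\ Q4 c b a x.
Proof. by case: HB => _ _ _ _ h; apply: h. Qed.

Lemma pattern f h g y : sw f -> is_leaf E y -> y != a -> y != b -> y != c ->
  anc f b h -> anc f y g -> anc f g h -> ~~ anc f a h -> ~~ anc f b g ->
  (forall x, is_leaf E x -> anc f x h -> x = b \/ anc f x g) -> False.
Proof.
move=> Hf ly ya yb yc hbh hyg hgh nah nbg hch.
have hyh := anc_trans hyg hgh.
apply: (H4 ly ya yb yc).
case: (Tri Hf la lb lc ab bc ac) => [[u [hau hbu ncu]]|[[u [hbu hcu nau]]|hT]].
- have hhu : anc f h u.
    case/orP: (anc_total hbh hbu) => // huh.
    by rewrite (anc_trans hau huh) in nah.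
  left; exists f; split => //; exists h, u; split; split => //.
  - by apply/negP => hch'; rewrite (anc_trans hch' hhu) in ncu.
  - exact: anc_trans hyh hhu.
- case: (boolP (anc f c h)) => hch'.
  + have hcg : anc f c g by case: (hch c lc hch') => // e; move: bc; rewrite e eqxx.
    right; right; right; exists f; split => //; exists g, h; split; split => //.
    by apply/negP => hag; rewrite (anc_trans hag hgh) in nah.
  + have hhu : anc f h u.
      case/orP: (anc_total hbh hbu) => // huh.
      by rewrite (anc_trans hcu huh) in hch'.
    right; left; exists f; split => //; exists h, u; split; split => //.
    exact: anc_trans hyh hhu.
- by case: H3; exists f.
Qed.

Lemma caseI1 p w : E p b -> E p w -> w != b -> ~~ reticulation E w -> False.
Proof.
move=> Epb Epw wb nrw.
have wr : w != r by apply: contraTneq Epw => ->; apply: root_in.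
have hw1 : indeg E w = 1.
  move: (vtype wr); rewrite (negbTE nrw) orbF /is_leaf /tree_vertex.
  by case/orP => /andP [/eqP -> _].
have [y ty] := tch_ex w; have ly := tch_leaf ty.
have hy : forall f, sw f -> anc f y p.
  move=> f Hf; apply: anc_trans (tch_anc ty Hf) _.
  by rewrite -(par1 Hf hw1 Epw); apply: anc_fx.
have yb : y != b.
  apply/eqP => e; subst y.
  have := tch_anc ty sw_f0; case/anc_step => [e|].
    by rewrite e eqxx in wb.
  by rewrite (par1 sw_f0 (leaf_indeg lb) Epb) => h; move: (E_nanc sw_f0 Epw); rewrite h.
have key : forall f x, sw f -> is_leaf E x -> x != b -> Tr f b x y -> False.
  move=> f x Hf lx xb [v [hbv hxv nyv]].
  have bv : b != v by apply: contraNneq xb => e; subst v; rewrite (anc_leaf Hf lb hxv).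
  have := anc_ne hbv bv; rewrite (par1 Hf (leaf_indeg lb) Epb) => hpv.
  by rewrite (anc_trans (hy f Hf) hpv) in nyv.
case: (eqVneq y a) => [e|ya].
  have [f [Hf h]] := H2 la ab ac.
  by apply: (key f c Hf lc); rewrite ?e // eq_sym.
have ca : c != a by rewrite eq_sym.
have cb : c != b by rewrite eq_sym.
case: (eqVneq y c) => [e|yc].
  have [f [Hf h]] := H1 lc ca cb.
  by apply: (key f a Hf la ab); rewrite e; apply: Tr_sym.
have [f [Hf h]] := H1 ly ya yb.
by apply: (key f a Hf la ab); apply: Tr_sym.
Qed.

Lemma nbw f p w : sw f -> E p b -> E p w -> w != b -> ~~ anc f b w.
Proof.
move=> Hf Epb Epw wb; apply/negP; case/anc_step => [e|]; first by rewrite e eqxx in wb.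
by rewrite (par1 Hf (leaf_indeg lb) Epb) => h; move: (E_nanc Hf Epw); rewrite h.
Qed.

Lemma caseI2o p w y : E p b -> E p w -> w != b -> tch w y -> y != a -> y != c -> False.
Proof.
move=> Epb Epw wb ty ya yc.
have ly := tch_leaf ty.
have yb : y != b.
  by apply/eqP => e; move: (nbw sw_f0 Epb Epw wb); rewrite -e (tch_anc ty sw_f0).
have [f1 [Hf1 [v [hav hbv nyv]]]] := H1 ly ya yb.
have bv : b != v by apply: contraNneq ab => e; subst v; rewrite (anc_leaf Hf1 lb hav).
have hpv : anc f1 p v by have := anc_ne hbv bv; rewrite (par1 Hf1 (leaf_indeg lb) Epb).
have naw : ~~ anc f1 a w.
  apply/negP => h; case/orP: (anc_total h hav) => h'.
    by rewrite (anc_trans (tch_anc ty Hf1) h') in nyv.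
  have c1 := anc_connect Hf1 h'; have c2 := anc_connect Hf1 hpv.
  by move: (acyc Epw); rewrite (connect_trans c1 c2).
have Hf := sw_upd Hf1 Epw.
have fw : upd f1 w p w = p by rewrite upd_at.
have bw : b != w by rewrite eq_sym.
apply: (pattern (h := p) (g := w) Hf ly ya yb yc).
- by apply: anc_eq; rewrite (par1 Hf (leaf_indeg lb) Epb).
- exact (tch_anc ty Hf).
- exact: anc_eq.
- apply/negP => h.
  have [k [_ _ Ek hk]] := child_step Hf h (leaf_ne la Epb).
  case: (child2 Epb Epw bw Ek) => e; subst k.
    by move: ab; rewrite (anc_leaf Hf lb hk) eqxx.
  by move: naw; rewrite upd_t in hk; rewrite hk.
- exact: nbw Hf Epb Epw wb.
- move=> x lx hx.
  have [k [_ _ Ek hk]] := child_step Hf hx (leaf_ne lx Epb).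
  case: (child2 Epb Epw bw Ek) => e; subst k; last by right.
  by left; apply: (anc_leaf Hf lb hk).
Qed.

Lemma caseI2a p w : E p b -> E p w -> w != b -> reticulation E w -> tch w a -> False.
Proof.
move=> Epb Epw wb rw ta.
have [q [Eqw qp]] : exists q, E q w /\ q != p.
  have [u1 [u2 [E1 E2 u12]]] := ret_pars rw.
  case: (eqVneq u1 p) => [e|u1p]; last by exists u1.
  by exists u2; split => //; rewrite -e eq_sym.
have pq : p != q by rewrite eq_sym.
have fwpq : forall f, sw f -> f w = p \/ f w = q.
  move=> f Hf; apply: (ret_par rw Epw Eqw pq); apply: (sw_E Hf).
  by apply: contraTneq Epw => ->; apply: root_in.
have nlq : ~~ is_leaf E q by apply/negP => lq; move: (leaf_noout w lq); rewrite Eqw.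
have [z /andP [Eqz hz]] := tchild nlq.
have hz1 : indeg E z = 1 by move: hz => /orP [] /andP [/eqP -> _].
have [d td] := tch_ex z; have ld := tch_leaf td.
have SC : ~~ connect E z w.
  apply/negP => h; apply: (nosc (u := q) (v := w)); split => //.
  exists z; split => //; apply/eqP => e; move: rw; rewrite -e.
  by case/andP; rewrite hz1.
have SCp : ~~ connect E z p.
  by apply: contraNN SC => h; apply: connect_trans h (connect1 Epw).
have noboth : forall f l, sw f -> anc f l w -> anc f l z -> False.
  move=> f l Hf h1 h2; case/orP: (anc_total h1 h2) => h.
    by move: SC; rewrite (anc_connect Hf h).
  case: (eqVneq z w) => [e|zw]; first by move: SC; rewrite e connect0.
  have := anc_ne h zw; rewrite (par1 Hf hz1 Eqz) => h'.
  by move: (E_nanc Hf Eqw); rewrite h'.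
have [f2 [Hf2 [v [hbv hcv nav]]]] := H2 la ab ac.
have bv : b != v by apply: contraNneq bc => e; subst v; rewrite (anc_leaf Hf2 lb hcv).
have hpv : anc f2 p v by have := anc_ne hbv bv; rewrite (par1 Hf2 (leaf_indeg lb) Epb).
have f2w : f2 w = q.
  case: (fwpq f2 Hf2) => // e.
  have : anc f2 a p by apply: anc_trans (tch_anc ta Hf2) _; rewrite -e; apply: anc_fx.
  by move=> h; rewrite (anc_trans h hpv) in nav.
have haq : forall g, sw g -> g w = q -> anc g a q.
  by move=> g Hg e; apply: anc_trans (tch_anc ta Hg) _; rewrite -e; apply: anc_fx.
have LL : forall l, anc f2 l z -> ~~ anc f2 l v.
  move=> l hlz; apply/negP => h; case/orP: (anc_total hlz h) => h'.
    case: (eqVneq z v) => [e|zv].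
      by subst v; move: SCp; rewrite (anc_connect Hf2 hpv).
    have := anc_ne h' zv; rewrite (par1 Hf2 hz1 Eqz) => h''.
    by rewrite (anc_trans (haq f2 Hf2 f2w) h'') in nav.
  by move: SCp; rewrite (connect_trans (anc_connect Hf2 h') (anc_connect Hf2 hpv)).
have dc : d != c.
  by apply/eqP => e; move: (LL d (tch_anc td Hf2)); rewrite e hcv.
have da : d != a.
  by apply/eqP => e; apply: (noboth f0 a sw_f0 (tch_anc ta sw_f0)); rewrite -e (tch_anc td sw_f0).
have db : d != b.
  apply/eqP => e; have := tch_anc td sw_f0; rewrite e; case/anc_step => [e'|].
    by move: qp; rewrite (indeg1_par (leaf_indeg lb) (_ : E q b) Epb) ?eqxx // -e'.
  rewrite (par1 sw_f0 (leaf_indeg lb) Epb) => h.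
  by move: SCp; rewrite (anc_connect sw_f0 h).
have ncw : ~~ anc f2 c w.
  apply/negP => h; case/orP: (anc_total h hcv) => h'.
    by rewrite (anc_trans (tch_anc ta Hf2) h') in nav.
  by move: (acyc Epw); rewrite (connect_trans (anc_connect Hf2 h') (anc_connect Hf2 hpv)).
have ndw : ~~ anc f2 d w.
  by apply/negP => h; apply: (noboth f2 d Hf2 h (tch_anc td Hf2)).
have npw : ~~ anc f2 p w := E_nanc Hf2 Epw.
have Hg := sw_upd Hf2 Epw.
have gw : upd f2 w p w = p by rewrite upd_at.
have T : T3 a c d.
  exists (upd f2 w p); split => //; exists v; split.
  - apply: (anc_trans (tch_anc ta Hg)); apply: (anc_trans (y := p)).
      exact: anc_eq.
    by rewrite upd_same.
  - by rewrite upd_same.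
  - by rewrite upd_same //; apply: LL; exact (tch_anc td Hf2).
have [_ [f' [Hf' [v1 [v2 [[h1 h2 h3 h4] [h5 h6 h7 h8]]]]]]] := H5 ld da db dc T.
have bv1 : b != v1 by apply: contraNneq bc => e; subst v1; rewrite (anc_leaf Hf' lb h1).
have hp1 : anc f' p v1 by have := anc_ne h2 bv1; rewrite (par1 Hf' (leaf_indeg lb) Epb).
have f'w : f' w = q.
  case: (fwpq f' Hf') => // e.
  have : anc f' a p by apply: anc_trans (tch_anc ta Hf') _; rewrite -e; apply: anc_fx.
  by move=> h; rewrite (anc_trans h hp1) in h3.
have bv2 : b != v2 by apply: contraNneq bc => e; subst v2; rewrite (anc_leaf Hf' lb h5).
have hp2 : anc f' p v2 by have := anc_ne h6 bv2; rewrite (par1 Hf' (leaf_indeg lb) Epb).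
have haw := tch_anc ta Hf'.
case/orP: (anc_total haw h7) => h.
  case: (eqVneq w v2) => [e|wv2].
    by subst v2; move: (E_nanc Hf' Epw); rewrite hp2.
  have := anc_ne h wv2; rewrite f'w => hq.
  have hdq : anc f' d q.
    apply: anc_trans (tch_anc td Hf') _; rewrite -(par1 Hf' hz1 Eqz); apply: anc_fx.
  by rewrite (anc_trans hdq hq) in h8.
by move: (acyc Epw); rewrite (connect_trans (anc_connect Hf' h) (anc_connect Hf' hp2)).
Qed.

Lemma scII p q z : reticulation E p -> E q p -> E q z -> z != p -> ~~ connect E z p.
Proof.
move=> rp Eqp Eqz zp; apply/negP => h; apply: (nosc (u := q) (v := p)); split => //.
by exists z.
Qed.

Lemma zb_ne p q z : E p b -> E q z -> q != p -> z != b.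
Proof.
move=> Epb Eqz qp; apply/eqP => e; subst z.
by move: qp; rewrite (indeg1_par (leaf_indeg lb) Eqz Epb) eqxx.
Qed.

Lemma nbz f p q z : sw f -> E p b -> reticulation E p -> E q p -> E q z -> z != p ->
  q != p -> ~~ anc f b z.
Proof.
move=> Hf Epb rp Eqp Eqz zp qp; apply/negP; case/anc_step => [e|].
  by move: (zb_ne Epb Eqz qp); rewrite e eqxx.
rewrite (par1 Hf (leaf_indeg lb) Epb) => h.
by move: (scII rp Eqp Eqz zp); rewrite (anc_connect Hf h).
Qed.

Lemma caseIIo p q z y : E p b -> reticulation E p -> E q p -> E q z -> indeg E z = 1 ->
  z != p -> tch z y -> y != a -> y != c -> False.
Proof.
move=> Epb rp Eqp Eqz hz1 zp ty ya yc.
have qp : q != p by apply: contraTneq Eqp => ->; apply: noloop.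
have SCp := scII rp Eqp Eqz zp.
have ly := tch_leaf ty.
have yb : y != b.
  by apply/eqP => e; move: (nbz sw_f0 Epb rp Eqp Eqz zp qp); rewrite -e (tch_anc ty sw_f0).
have [f1 [Hf1 [v [hav hbv nyv]]]] := H1 ly ya yb.
have bv : b != v by apply: contraNneq ab => e; subst v; rewrite (anc_leaf Hf1 lb hav).
have hpv : anc f1 p v by have := anc_ne hbv bv; rewrite (par1 Hf1 (leaf_indeg lb) Epb).
have naz : ~~ anc f1 a z.
  apply/negP => h; case/orP: (anc_total h hav) => h'.
    by rewrite (anc_trans (tch_anc ty Hf1) h') in nyv.
  by move: SCp; rewrite (connect_trans (anc_connect Hf1 h') (anc_connect Hf1 hpv)).
have nap1 : ~~ anc f1 a p.
  by apply/negP => h; move: ab; rewrite (below_ret Hf1 rp Epb lb la h) eqxx.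
have Hf := sw_upd Hf1 Eqp.
have pz : p != z by rewrite eq_sym.
apply: (pattern (h := q) (g := z) Hf ly ya yb yc).
- apply: (anc_trans (y := p)); apply: anc_eq; first by rewrite (par1 Hf (leaf_indeg lb) Epb).
  by rewrite upd_at.
- exact (tch_anc ty Hf).
- by apply: anc_eq; rewrite (par1 Hf hz1 Eqz).
- apply/negP => h.
  have [k [_ _ Ek hk]] := child_step Hf h (leaf_ne la Eqp).
  case: (child2 Eqz Eqp zp Ek) => e; subst k.
    by move: naz; rewrite upd_same in hk; rewrite ?hk.
  by move: ab; rewrite (below_ret Hf rp Epb lb la hk) eqxx.
- exact: nbz Hf Epb rp Eqp Eqz zp qp.
- move=> x lx hx.
  have [k [_ _ Ek hk]] := child_step Hf hx (leaf_ne lx Eqp).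
  case: (child2 Eqz Eqp zp Ek) => e; subst k; first by right.
  by left; apply: (below_ret Hf rp Epb lb lx hk).
Qed.

Lemma noboth2 f p q1 q2 z1 z2 l : sw f -> reticulation E p -> E q1 p -> E q2 p ->
  q1 != q2 -> E q1 z1 -> E q2 z2 -> indeg E z1 = 1 -> indeg E z2 = 1 ->
  z1 != p -> z2 != p -> anc f l z1 -> anc f l z2 -> False.
Proof.
move=> Hf rp E1 E2 q12 Ez1 Ez2 h1 h2 z1p z2p a1 a2.
have S1 := scII rp E1 Ez1 z1p; have S2 := scII rp E2 Ez2 z2p.
case: (eqVneq z1 z2) => [e|z12].
  by subst z2; move: q12; rewrite (indeg1_par h1 Ez1 Ez2) eqxx.
case/orP: (anc_total a1 a2) => h.
  have := anc_ne h z12; rewrite (par1 Hf h1 Ez1) => h'.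
  by move: S2; rewrite (connect_trans (anc_connect Hf h') (connect1 E1)).
have z21 : z2 != z1 by rewrite eq_sym.
have := anc_ne h z21; rewrite (par1 Hf h2 Ez2) => h'.
by move: S1; rewrite (connect_trans (anc_connect Hf h') (connect1 E2)).
Qed.

Lemma caseIId p qa qc za zc : E p b -> reticulation E p -> E qa p -> E qc p -> qa != qc ->
  E qa za -> E qc zc -> indeg E za = 1 -> indeg E zc = 1 -> za != p -> zc != p ->
  tch za a -> tch zc c -> za = a.
Proof.
move=> Epb rp Eap Ecp qac Eaz Ecz ha1 hc1 zap zcp ta tc.
case: (eqVneq za a) => // zaa; exfalso.
have NB := noboth2 _ rp Eap Ecp qac Eaz Ecz ha1 hc1 zap zcp.
have SCa := scII rp Eap Eaz zap.
case: (tch_par ta) => [e|[t [Eta hta ht1]]]; first by rewrite e eqxx in zaa.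
have ht : indeg E t = 1 by case: ht1 => // ->.
have tr : t != r.
  apply/eqP => e; move: HN => [[_ h0 _ _] _ _]; by move: ht; rewrite e h0.
have tt : tree_vertex E t.
  case/orP: (vtype tr) => [lt|/orP [//|rt]].
    by move: (leaf_noout a lt); rewrite Eta.
  by move: rt; rewrite /reticulation ht.
have to2 : outdeg E t = 2 by move: tt => /andP [_ /eqP].
have [s [Ets sa]] := outdeg2_ch to2 Eta.
have sp : s != p.
  apply/eqP => e; subst s.
  case: (ret_par rp Eap Ecp qac Ets) => e; subst t.
    by move: (E_nanc sw_f0 Eaz); rewrite (hta f0 sw_f0).
  by move: SCa; rewrite (connect_trans (anc_connect sw_f0 (hta f0 sw_f0)) (connect1 Ecp)).
have Hf := sw_upd (sw_upd sw_f0 Eap) Ets.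
have fs : upd (upd f0 p qa) s t s = t by rewrite upd_at.
have fp : upd (upd f0 p qa) s t p = qa by rewrite upd_ne ?upd_at // eq_sym.
move: (upd (upd f0 p qa) s t) Hf fs fp => f Hf fs fp.
have [x tx] := tch_ex s; have lx := tch_leaf tx.
have hxt : anc f x t by apply: anc_trans (tch_anc tx Hf) _; apply: anc_eq.
have hat : anc f a t by apply: anc_eq; rewrite (par1 Hf (leaf_indeg la) Eta).
have htza := hta f Hf.
have hzaqa : anc f za qa by apply: anc_eq; rewrite (par1 Hf ha1 Eaz).
have hbp : anc f b p by apply: anc_eq; rewrite (par1 Hf (leaf_indeg lb) Epb).
have nbt : ~~ anc f b t.
  apply/negP; case/anc_step => [e|]; first by move: (leaf_ne lb Eta); rewrite e eqxx.
  rewrite (par1 Hf (leaf_indeg lb) Epb); case/anc_step => [e|].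
    by move: rp; rewrite /reticulation -e ht.
  rewrite fp => h.
  have e : qa = t.
    apply: conn_antisym (anc_connect Hf h).
    exact: connect_trans (connect1 Eaz) (anc_connect Hf htza).
  by rewrite -e in htza; move: (E_nanc Hf Eaz); rewrite htza.
have nct : ~~ anc f c t.
  by apply/negP => h; apply: (NB f c Hf (anc_trans h htza) (tch_anc tc Hf)).
have ncqa : ~~ anc f c qa.
  apply/negP => h.
  have [k [_ _ Ek hk]] := child_step Hf h (leaf_ne lc Eap).
  case: (child2 Eaz Eap zap Ek) => e; subst k.
    exact: (NB f c Hf hk (tch_anc tc Hf)).
  by move: bc; rewrite (below_ret Hf rp Epb lb lc hk) eqxx.
have xa : x != a.
  apply/eqP => e; have := tch_anc tx Hf; rewrite e; case/anc_step => [e'|].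
    by rewrite e' eqxx in sa.
  rewrite (par1 Hf (leaf_indeg la) Eta) => h.
  by move: (E_nanc Hf Ets); rewrite h.
have xb : x != b by apply/eqP => e; move: nbt; rewrite -e hxt.
have xc : x != c by apply/eqP => e; move: nct; rewrite -e hxt.
apply: (H4 lx xa xb xc); right; right; left.
exists f; split => //; exists t, qa; split; split => //.
- exact: anc_trans hxt (anc_trans htza hzaqa).
- exact: anc_trans hat (anc_trans htza hzaqa).
- exact: anc_trans hbp (anc_eq fp).
Qed.

End Bwd.


Lemma bwd a b c : is_leaf E a -> is_leaf E b -> is_leaf E c ->
  a != b -> b != c -> a != c -> BH a b c -> double_reticulated_cherry E a b c.
Proof.
move=> la lb lc ab bc ac HB.
have HB' := BH_sym HB.
have ca : c != a by rewrite eq_sym.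
have cb : c != b by rewrite eq_sym.
have ba : b != a by rewrite eq_sym.
have br : b != r.
  apply/eqP => e; move: HN => [[_ h0 _ _] _ _]; move: (leaf_indeg lb); by rewrite e h0.
have [p Epb] := nonroot_in br.
have npl : ~~ is_leaf E p by apply/negP => lp; move: (leaf_noout b lp); rewrite Epb.
case: (boolP (reticulation E p)) => rp.
  have [q1 [q2 [E1 E2 q12]]] := ret_pars rp.
  have getz : forall q, E q p -> exists z, [/\ E q z, indeg E z = 1, z != p & exists y, tch z y].
    move=> q Eq.
    have nl : ~~ is_leaf E q by apply/negP => lq; move: (leaf_noout p lq); rewrite Eq.
    have [z /andP [Ez hz]] := tchild nl.
    have hz1 : indeg E z = 1 by move: hz => /orP [] /andP [/eqP -> _].
    exists z; split => //; last exact: tch_ex.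
    by apply/eqP => e; move: rp; rewrite /reticulation -e hz1.
  have [z1 [Ez1 h1 z1p [y1 ty1]]] := getz q1 E1.
  have [z2 [Ez2 h2 z2p [y2 ty2]]] := getz q2 E2.
  have yac : forall q z y, E q p -> E q z -> indeg E z = 1 -> z != p -> tch z y ->
      y = a \/ y = c.
    move=> q z y Eq Ez hz zp ty.
    case: (eqVneq y a) => [|ya]; first by left.
    case: (eqVneq y c) => [|yc]; first by right.
    by case: (caseIIo la lb lc ab bc ac HB Epb rp Eq Ez hz zp ty ya yc).
  have y12 : y1 != y2.
    apply/eqP => e; subst y2.
    exact: (noboth2 sw_f0 rp E1 E2 q12 Ez1 Ez2 h1 h2 z1p z2p
             (tch_anc ty1 sw_f0) (tch_anc ty2 sw_f0)).
  have q21 : q2 != q1 by rewrite eq_sym.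
  case: (yac _ _ _ E1 Ez1 h1 z1p ty1) => e1; case: (yac _ _ _ E2 Ez2 h2 z2p ty2) => e2;
    subst y1 y2; rewrite ?eqxx // in y12.
    have za := caseIId la lb lc bc HB Epb rp E1 E2 q12 Ez1 Ez2 h1 h2 z1p z2p ty1 ty2.
    have zc := caseIId lc lb la ba HB' Epb rp E2 E1 q21 Ez2 Ez1 h2 h1 z2p z1p ty2 ty1.
    subst z1 z2; split; [exists q1, p | exists q2, p]; split => //.
  have zc := caseIId lc lb la ba HB' Epb rp E1 E2 q12 Ez1 Ez2 h1 h2 z1p z2p ty1 ty2.
  have za := caseIId la lb lc bc HB Epb rp E2 E1 q21 Ez2 Ez1 h2 h1 z2p z1p ty2 ty1.
  subst z1 z2; split; [exists q2, p | exists q1, p]; split => //.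
have po : outdeg E p = 2.
  case: (eqVneq p r) => [->|pr]; first by move: HN => [[_ _ h _] _ _].
  case/orP: (vtype pr) => [lp|/orP [|rp']]; first by rewrite lp in npl.
    by case/andP => _ /eqP.
  by rewrite rp' in rp.
have [w [Epw wb]] := outdeg2_ch po Epb.
case: (boolP (reticulation E w)) => rw; last first.
  by case: (caseI1 la lb lc ab bc ac HB Epb Epw wb rw).
have [y ty] := tch_ex w.
case: (eqVneq y a) => [e|ya].
  by subst y; case: (caseI2a la lb ab bc ac HB Epb Epw wb rw ty).
case: (eqVneq y c) => [e|yc].
  by subst y; case: (caseI2a lc lb cb ba ca HB' Epb Epw wb rw ty).
by case: (caseI2o la lb lc ab bc ac HB Epb Epw wb ty ya yc).
Qed.

End Net.

Ltac dist := rewrite /= ?inE ?negb_or; repeat (apply (introT andP); split); try done; rewrite eq_sym; done.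

Theorem lemma8 (V : finType) (E : rel V) (r : V) (a b c : V) :
  normal_network E r ->
  3 <= #|leaves E| ->
  a \in leaves E -> b \in leaves E -> c \in leaves E ->
  uniq [:: a; b; c] ->
  (double_reticulated_cherry E a b c <->
   [/\ (* (i) *)
       (forall x, x \in leaves E -> x \notin [:: a; b] -> triple_in E a b x)
       /\ (forall x, x \in leaves E -> x \notin [:: b; c] -> triple_in E b c x)
       /\ ~ triple_in E a c b,
       (* (ii) *)
       ~ (exists x, [/\ x \in leaves E, x \notin [:: a; b; c] &
            quad_in E x b a c \/ quad_in E x b c a \/
            quad_in E x a b c \/ quad_in E x c b a]) &
       (* (iii) *)
       forall x, x \in leaves E -> x \notin [:: a; b; c] ->
         triple_in E a c x -> quad_in E a b c x /\ quad_in E c b a x]).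
Proof.
move=> HN _ ha hb hc hu.
have la : is_leaf E a by move: ha; rewrite inE.
have lb : is_leaf E b by move: hb; rewrite inE.
have lc : is_leaf E c by move: hc; rewrite inE.
have hu' := hu; move: hu' => /=; rewrite !inE !negb_or => /andP [/andP [ab ac] /andP [bc _]].
have ba : b != a by rewrite eq_sym.
have ca : c != a by rewrite eq_sym.
have cb : c != b by rewrite eq_sym.
have T3of : forall x y z, triple_in E x y z -> T3 E r x y z.
  by move=> x y z h; exact: (disp3_sw HN h).
have ofT3 : forall x y z, x \in leaves E -> y \in leaves E -> z \in leaves E ->
    uniq [:: x; y; z] -> T3 E r x y z -> triple_in E x y z.
  move=> x y z hx hy hz hxyz [f [Hf h]]; apply: (sw_disp3 HN Hf) => //.
  by rewrite /= hx hy hz.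
have Q4of : forall x1 x2 x3 x4, quad_in E x1 x2 x3 x4 -> Q4 E r x1 x2 x3 x4.
  by move=> x1 x2 x3 x4 h; exact: (disp4_sw HN h).
have ofQ4 : forall x1 x2 x3 x4, x1 \in leaves E -> x2 \in leaves E -> x3 \in leaves E ->
    x4 \in leaves E -> uniq [:: x1; x2; x3; x4] -> Q4 E r x1 x2 x3 x4 -> quad_in E x1 x2 x3 x4.
  move=> x1 x2 x3 x4 h1 h2 h3 h4 hq [f [Hf h]]; apply: (sw_disp4 HN Hf) => //.
  by rewrite /= h1 h2 h3 h4.
split.
- case=> [[pa [pb [Ea Eb rb Eab]]] [pc [pb' [Ec Eb' rb' Ecb]]]].
  have e : pb' = pb := indeg1_par (leaf_indeg lb) Eb' Eb.
  subst pb'.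
  split; [split; [|split] | |].
  + move=> x hx; rewrite !inE negb_or => /andP [xa xb].
    have lx : is_leaf E x by move: hx; rewrite inE.
    have [f [Hf _ h]] := ch_tr HN lb Eb rb la Ea Eab lx xa xb.
    by apply: ofT3 => //; [dist | exists f].
  + move=> x hx; rewrite !inE negb_or => /andP [xb xc].
    have lx : is_leaf E x by move: hx; rewrite inE.
    have [f [Hf _ h]] := ch_tr HN lb Eb rb lc Ec Ecb lx xc xb.
    by apply: ofT3 => //; [dist | exists f; split => //; apply: Tr_sym].
  + by move=> /T3of; apply: (nTacb HN la lb lc ac Ea Eb Ec Eab Ecb rb).
  + case=> x [hx]; rewrite !inE !negb_or => /andP [xa /andP [xb xc]] hq.
    have lx : is_leaf E x by move: hx; rewrite inE.
    case: hq => [h|[h|[h|h]]].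
    * have [f [Hf [v1 [v2 [[h1 h2 h3 h4] _]]]]] := Q4of _ _ _ _ h.
      exact: (nQ1 HN la lb lc ac Ea Eb Ec Eab Ecb rb lx xb Hf h1 h2 h3 h4).
    * have [f [Hf [v1 [v2 [[h1 h2 h3 h4] _]]]]] := Q4of _ _ _ _ h.
      exact: (nQ1 HN la lb lc ac Ea Eb Ec Eab Ecb rb lx xb Hf h1 h2 h4 h3).
    * exact: (nQ3 HN la lb lc ac Ea Eb Ec Eab Ecb rb lx xa xb (Q4of _ _ _ _ h)).
    * exact: (nQ3 HN lc lb la ca Ec Eb Ea Ecb Eab rb lx xc xb (Q4of _ _ _ _ h)).
  + move=> x hx; rewrite !inE !negb_or => /andP [xa /andP [xb xc]] ht.
    have lx : is_leaf E x by move: hx; rewrite inE.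
    split.
      apply: ofQ4 => //; first by dist.
      exact: (fwd_iii HN la lb lc ab bc ac Ea Eb Eab rb lx xa xb xc (T3of _ _ _ ht)).
    apply: ofQ4 => //; first by dist.
    exact: (fwd_iii HN lc lb la cb ba ca Ec Eb Ecb rb lx xc xb xa (T3_sym (T3of _ _ _ ht))).
- case=> [[H1' [H2' H3']] H4' H5'].
  apply: (bwd HN la lb lc ab bc ac); split.
  + move=> x lx xa xb; apply: T3of; apply: H1'; first by rewrite inE.
    by rewrite !inE negb_or xa xb.
  + move=> x lx xb xc; apply: T3of; apply: H2'; first by rewrite inE.
    by rewrite !inE negb_or xb xc.
  + by move=> h; apply: H3'; apply: ofT3 => //; dist.
  + move=> x lx xa xb xc hq; apply: H4'; exists x; split.
    * by rewrite inE.
    * by rewrite !inE !negb_or xa xb xc.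
    * have hx : x \in leaves E by rewrite inE.
      case: hq => [h|[h|[h|h]]].
      - by left; apply: ofQ4 => //; dist.
      - by right; left; apply: ofQ4 => //; dist.
      - by right; right; left; apply: ofQ4 => //; dist.
      - by right; right; right; apply: ofQ4 => //; dist.
  + move=> x lx xa xb xc ht.
    have hx : x \in leaves E by rewrite inE.
    have hn : x \notin [:: a; b; c] by rewrite !inE !negb_or xa xb xc.
    have ht' : triple_in E a c x by apply: ofT3 => //; dist.
    have [q1 q2] := H5' x hx hn ht'.
    by split; apply: Q4of.
Qed.
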